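(* Let $k\ge 2$ and $m\ge 1$ be integers, let $x=\zeta_k=e^{2\pi\sqrt{-1}/k}$, and let $H\in \mathrm{BH}(mk,k)$ be such that its first $k$ rows form the $k\times mk$ matrix $F_k\otimes j_m$. Partition these first $k$ rows into the $k$ consecutive $k\times m$ blocks $B_1,\dots,B_k$ (block $B_\ell$ consisting of columns $(\ell-1)m+1,\dots,\ell m$). Then for any choice of elements $c_1,\dots,c_k\in\langle x\rangle$, the matrix $K$ obtained from $H$ by replacing each block $B_\ell$ by $c_\ell B_\ell$ (and leaving all other entries unchanged) is also in $\mathrm{BH}(mk,k)$.
   Context: For $k\ge 1$, $\zeta_k=e^{2\pi\sqrt{-1}/k}$ and $\langle \zeta_k\rangle$ is the set of all $k$-th roots of unity. A complex Hadamard matrix of order $n$ is an $n\times n$ matrix $H$ with all entries of modulus $1$ and $HH^{\ast}=nI_n$. $\mathrm{BH}(n,k)$ denotes the set of $n\times n$ complex Hadamard matrices all of whose entries lie in $\langle\zeta_k\rangle$ (Butson Hadamard matrices). $F_k=[\zeta_k^{(i-1)(j-1)}]_{1\le i,j\le k}$ is the $k\times k$ Fourier matrix, $j_m$ denotes the all-ones row vector of length $m$, and $\otimes$ is the Kronecker product, $A\otimes B=[a_{ij}B]$. *)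

(* Defs.v *)
From mathcomp Require Import all_boot all_order all_algebra.
From mathcomp Require Import all_classical all_reals all_analysis.
From mathcomp Require Export complex.
Set Implicit Arguments.
Unset Strict Implicit.
Unset Printing Implicit Defensive.
Import Order.TTheory GRing.Theory Num.Theory.
Local Open Scope ring_scope.
Local Open Scope complex_scope.

Definition zeta (R : realType) (k : nat) : R[i] :=
  (cos (2 * pi / k%:R)) +i* (sin (2 * pi / k%:R)).

(* membership in <zeta_k>, the set of all k-th roots of unity *)
Definition kth_root (R : realType) (k : nat) (c : R[i]) : Prop := c ^+ k = 1.

Definition adjmx (R : realType) (m n : nat) (A : 'M[R[i]]_(m, n)) : 'M[R[i]]_(n, m) :=
  (map_mx (@conjc R) A)^T.

Definition complex_hadamard (R : realType) (n : nat) (H : 'M[R[i]]_n) : Prop :=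
  (forall i j, `|H i j| = 1) /\ H *m adjmx H = n%:R%:M.

Definition BH (R : realType) (n k : nat) (H : 'M[R[i]]_n) : Prop :=
  complex_hadamard H /\ (forall i j, kth_root k (H i j)).

(* Rows 0..k-1 of H (0-indexed) equal F_k (x) j_m:
   entry (a, j) = zeta_k^(a * (j / m)). *)
Definition first_rows_Fk_jm (R : realType) (m k : nat) (H : 'M[R[i]]_(m * k)) : Prop :=
  forall (a j : 'I_(m * k)), (a < k)%N -> H a j = zeta R k ^+ (a * (j %/ m))%N.

(* K: multiply block B_l (rows 0..k-1, columns l*m .. l*m+m-1, 0-indexed l)
   by c l, leave all other entries unchanged. *)
Definition scale_blocks (R : realType) (m k : nat) (c : nat -> R[i])
  (H : 'M[R[i]]_(m * k)) : 'M[R[i]]_(m * k) :=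
  \matrix_(a, j) (if (a < k)%N then c (j %/ m)%N * H a j else H a j).

(* Main.v *)
Require Import Defs.
From mathcomp Require Import all_boot all_order all_algebra.
From mathcomp Require Import all_classical all_reals all_analysis.
From mathcomp Require Import complex.
Import GRing.Theory Num.Theory.
Local Open Scope ring_scope.

Lemma blk_sum (R : realType) (m k : nat) (hm : (0 < m)%N) (F : nat -> R[i])
  (g : 'I_(m * k) -> R[i]) :
  \sum_(j < m * k) F (j %/ m)%N * g j =
  \sum_(l < k) F l * \sum_(j < m * k | (j %/ m)%N == l) g j.
Proof.
have blkP (j : 'I_(m * k)) : (j %/ m < k)%N by rewrite ltn_divLR // [(k * m)%N]mulnC.
rewrite (partition_big (fun j => Ordinal (blkP j)) xpredT) //=.
apply: eq_bigr => l _; rewrite mulr_sumr; apply: eq_big => j //.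
by move/eqP => <-.
Qed.

Lemma cnt_sum (R : realType) (m k : nat) (hm : (0 < m)%N) (F : nat -> R[i]) :
  \sum_(j < m * k) F (j %/ m)%N = m%:R * \sum_(l < k) F l.
Proof.
elim: k => [|k IH]; first by rewrite muln0 !big_ord0 mulr0.
rewrite big_ord_recr /= mulrDr -IH -!(big_mkord xpredT (fun j => F (j %/ m)%N)).
rewrite (big_cat_nat _ (n := m * k)) //=; last by rewrite leq_pmul2l.
congr (_ + _).
rewrite -{1}[(m * k)%N]add0n big_addn mulnS addnK.
rewrite big_nat_cond (eq_bigr (fun _ => F k)); last first.
  move=> i; rewrite andbT /= => him.
  by rewrite addnC mulnC divnMDl // divn_small ?addn0.
by rewrite -big_nat_cond sumr_const_nat subn0 mulr_natl.
Qed.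

Lemma modfact (k l l0 : nat) : (l < k)%N -> (l0 < k)%N ->
  ((l + (k - 1) * l0) %% k == 0)%N = (l == l0).
Proof.
move=> lk l0k; have k0 : (0 < k)%N by apply: leq_ltn_trans lk.
apply/idP/idP.
  move=> /eqP h.
  have : ((l + (k - 1) * l0 + l0) %% k = l0 %% k)%N by rewrite -modnDml h.
  rewrite -addnA -{2}(mul1n l0) -mulnDl subnK // [(l + _)%N]addnC [(k * l0)%N]mulnC modnMDl.
  by rewrite !modn_small // => ->.
by move/eqP->; rewrite -{1}(mul1n l0) -mulnDl subnKC // modnMr.
Qed.
Theorem proposition5p1 (R : realType) (k m : nat) (hk : (2 <= k)%N) (hm : (1 <= m)%N)
  (H : 'M[R[i]]_(m * k)) (c : nat -> R[i]) :
  @BH R (m * k) k H -> @first_rows_Fk_jm R m k H ->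
  (forall l, (l < k)%N -> @kth_root R k (c l)) ->
  @BH R (m * k) k (@scale_blocks R m k c H).
Proof.
move=> [[Hn Hu] Hr] Hf Hc.
have k0 : (0 < k)%N by apply: leq_trans hk.
have km : (k <= m * k)%N := leq_pmull k hm.
have blkP (j : 'I_(m * k)) : (j %/ m < k)%N by rewrite ltn_divLR // [(k * m)%N]mulnC.
set z := zeta R k.
have prodE (M : 'M[R[i]]_(m * k)) a b :
    (M *m adjmx M) a b = \sum_j M a j * conjc (M b j).
  by rewrite !mxE; apply: eq_bigr => j _; rewrite !mxE.
have orth (a b : 'I_(m * k)) : a != b -> \sum_j H a j * conjc (H b j) = 0.
  move=> ab; rewrite -prodE Hu !mxE (negbTE ab) mulr0n //.
have Hz1 : z ^+ k = 1.
  have h1 : (1 < m * k)%N by apply: leq_trans hk km.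
  have h2 : (m < m * k)%N by rewrite -{1}[m]muln1 ltn_pmul2l.
  have := Hr (Ordinal h1) (Ordinal h2); rewrite /kth_root Hf //= divnn hm.
  by rewrite mul1n expr1.
have F2 d : (0 < d < k)%N -> \sum_(l < k) z ^+ (d * l) = 0.
  case/andP => d0 dk.
  have h1 : (d < m * k)%N by apply: leq_trans dk km.
  have h0 : (0 < m * k)%N by apply: leq_trans k0 km.
  have := orth (Ordinal h1) (Ordinal h0).
  rewrite -(inj_eq val_inj) /= -lt0n d0 => /(_ isT).
  rewrite (eq_bigr (fun j : 'I_(m * k) => z ^+ (d * (j %/ m)))); last first.
    by move=> j _; rewrite Hf // Hf // mul0n expr0 conjc1 mulr1.
  rewrite (@cnt_sum R m k hm (fun l => z ^+ (d * l))) => /eqP.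
  by rewrite mulf_eq0 pnatr_eq0 eqn0Ngt hm /= => /eqP.
have Geom e : \sum_(a < k) z ^+ (a * e) = if (e %% k == 0)%N then k%:R else 0.
  have E a : z ^+ (a * e) = z ^+ ((e %% k) * a).
    rewrite mulnC !exprM {1}(divn_eq e k) exprD mulnC exprM Hz1 expr1n mul1r //.
  under eq_bigr do rewrite E.
  case: ifP => [/eqP -> | /negbT ne].
    under eq_bigr do rewrite mul0n expr0.
    by rewrite sumr_const card_ord.
  by apply: F2; rewrite lt0n ne ltn_pmod.
have blk0 (r : 'I_(m * k)) : (k <= r)%N -> forall l0 : 'I_k,
    \sum_(j < m * k | (j %/ m)%N == l0) conjc (H r j) = 0.
  move=> kr l0.
  set T := fun l : 'I_k => \sum_(j < m * k | (j %/ m)%N == l) conjc (H r j).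
  have E (a : 'I_k) : \sum_(l < k) z ^+ (a * l) * T l = 0.
    rewrite -(@blk_sum R m k hm (fun l => z ^+ (a * l))).
    have ha : (a < m * k)%N by apply: leq_trans (ltn_ord a) km.
    have ne : Ordinal ha != r.
      by rewrite -(inj_eq val_inj) /= neq_ltn (leq_trans (ltn_ord a) kr).
    apply: etrans (orth _ _ ne).
    by apply: eq_bigr => j _; rewrite [H (Ordinal ha) j]Hf //; apply: (ltn_ord a).
  have : \sum_(a < k) z ^+ (a * ((k - 1) * l0)) * (\sum_(l < k) z ^+ (a * l) * T l) = 0.
    by rewrite big1 // => a _; rewrite E mulr0.
  rewrite (eq_bigr (fun a : 'I_k => \sum_(l < k) T l * z ^+ (a * (l + (k - 1) * l0)))); last first.
    move=> a _; rewrite mulr_sumr; apply: eq_bigr => l _.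
    by rewrite mulnDr exprD mulrCA mulrA mulrC.
  rewrite exchange_big /=.
  rewrite (eq_bigr (fun l : 'I_k => T l * (if (l == l0) then k%:R else 0))); last first.
    by move=> l _; rewrite -mulr_sumr Geom modfact.
  rewrite (bigD1 l0) //= eqxx big1 ?addr0; last by move=> l /negbTE ->; rewrite mulr0.
  by move/eqP; rewrite mulf_eq0 pnatr_eq0 eqn0Ngt k0 orbF => /eqP.
have cn (l : nat) : (l < k)%N -> `|c l| = 1.
  move=> lk; apply/eqP; rewrite -(pexpr_eq1 k0) ?normr_ge0 // -normrX.
  by have := Hc l lk; rewrite /kth_root => ->; rewrite normr1.
have cc (l : nat) : (l < k)%N -> c l * conjc (c l) = 1.
  by move=> lk; rewrite -sqr_normc cn // expr1n.
have blk1 (r : 'I_(m * k)) : (k <= r)%N -> forall l0 : 'I_k,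
    \sum_(j < m * k | (j %/ m)%N == l0) H r j = 0.
  move=> kr l0; have := congr1 conjc (blk0 r kr l0).
  rewrite rmorph_sum conjc0 => E; rewrite -[RHS]E.
  by apply: eq_bigr => j _; rewrite /= conjcK.
split; first split.
- move=> a j; rewrite mxE; case: ifP => _; last exact: Hn.
  by rewrite normrM Hn (cn _ (blkP j)) mulr1.
- apply/matrixP => a b; rewrite -Hu !prodE.
  rewrite (eq_bigr (fun j : 'I_(m * k) => (if (a < k)%N then c (j %/ m)%N * H a j else H a j) *
     conjc (if (b < k)%N then c (j %/ m)%N * H b j else H b j))); last first.
    by move=> j _; rewrite !mxE.
  case: (ltnP a k) => ak; case: (ltnP b k) => bk.
  + apply: eq_bigr => j _; rewrite rmorphM mulrACA (cc _ (blkP j)) mul1r //.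
  + have ne : a != b by rewrite -(inj_eq val_inj) neq_ltn (leq_trans ak bk).
    rewrite (orth a b ne).
    rewrite (eq_bigr (fun j : 'I_(m * k) => (c (j %/ m)%N * z ^+ (a * (j %/ m))) * conjc (H b j))); last first.
      by move=> j _; rewrite Hf.
    rewrite (@blk_sum R m k hm (fun l => c l * z ^+ (a * l))) big1 // => l _.
    by rewrite blk0 // mulr0.
  + have ne : a != b by rewrite -(inj_eq val_inj) neq_ltn orbC (leq_trans bk ak).
    rewrite (orth a b ne).
    rewrite (eq_bigr (fun j : 'I_(m * k) => conjc (c (j %/ m)%N * z ^+ (b * (j %/ m))) * H a j)); last first.
      by move=> j _; rewrite [H b j]Hf // mulrC.
    rewrite (@blk_sum R m k hm (fun l => conjc (c l * z ^+ (b * l)))) big1 // => l _.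
    by rewrite blk1 // mulr0.
  + by [].
- move=> a j; rewrite /kth_root mxE; case: ifP => _; last exact: Hr.
  have := Hc _ (blkP j); have := Hr a j; rewrite /kth_root exprMn => -> ->.
  by rewrite mulr1.
Qed.
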